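(* Let $\omega\in\mathbb{R}^n$ be resonant of order $r\ge1$. Then there exist a matrix $A\in GL_n(\mathbb{Z})$ and positive integers $d_1,\dots,d_r$ with $d_i$ dividing $d_{i+1}$ for $1\le i<r$, such that $(d_1e_1,\dots,d_re_r)$ is a basis of the resonance module $R(A\omega)$, where $(e_1,\dots,e_n)$ is the standard basis of $\mathbb{R}^n$. In particular $A\omega=(w/T,\omega')\in\mathbb{Q}^r\times\mathbb{R}^{n-r}$, where $\omega'\in\mathbb{R}^{n-r}$ is non-resonant and $w/T\in\mathbb{Q}^r$ is a rational vector of period $T=d_r$. When $\omega$ is rational (i.e. $r=n$), one obtains $n$ integers $d_1|d_2|\cdots|d_n$ with $d_n$ equal to the period of $\omega$, and a matrix $A\in GL_n(\mathbb{Z})$ such that $A\omega=(a_1/d_1,a_2/d_2,\dots,a_n/d_n)$ with each fraction $a_i/d_i$ irreducible ($a_i\in\mathbb{Z}$, $\gcd(a_i,d_i)=1$).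
   Context: For $\omega\in\mathbb{R}^m$, the resonance module $R(\omega)$ is the subgroup $\{k\in\mathbb{Z}^m:\langle k,\omega\rangle\in\mathbb{Z}\}$ of $\mathbb{Z}^m$; its rank is the resonance order of $\omega$. The vector $\omega$ is resonant if $R(\omega)\ne\{0\}$, non-resonant otherwise. A rational vector (all coordinates rational) has period equal to the least common denominator of its coordinates. *)

(* Defs.v *)
From HB Require Import structures.
From mathcomp Require Import all_boot all_order all_algebra.
From mathcomp Require Import reals.
Set Implicit Arguments. Unset Strict Implicit. Unset Printing Implicit Defensive.
Import Order.TTheory GRing.Theory Num.Theory.
Local Open Scope ring_scope.

(* Vectors of R^n and Z^n are column vectors 'cV_n, coordinates indexed 0..n-1. *)

Definition dotZ (R : realType) n (k : 'cV[int]_n) (w : 'cV[R]_n) : R :=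
  \sum_(i < n) (k i 0)%:~R * w i 0.

Definition in_resonance (R : realType) n (w : 'cV[R]_n) (k : 'cV[int]_n) : Prop :=
  dotZ k w \is a Num.int.

Definition resonant (R : realType) n (w : 'cV[R]_n) : Prop :=
  exists k : 'cV[int]_n, k != 0 /\ in_resonance w k.

Definition nonresonant (R : realType) n (w : 'cV[R]_n) : Prop :=
  forall k : 'cV[int]_n, in_resonance w k -> k = 0.

Definition Zfree n m (v : 'I_m -> 'cV[int]_n) : Prop :=
  forall c : 'I_m -> int, \sum_(i < m) c i *: v i = 0 -> forall i, c i = 0.

Definition subgroup_rank n (S : 'cV[int]_n -> Prop) (r : nat) : Prop :=
  (exists v : 'I_r -> 'cV[int]_n, (forall i, S (v i)) /\ Zfree v) /\
  (forall v : 'I_r.+1 -> 'cV[int]_n, (forall i, S (v i)) -> ~ Zfree v).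

Definition resonance_order (R : realType) n (w : 'cV[R]_n) (r : nat) : Prop :=
  subgroup_rank (in_resonance w) r.

Definition is_Zbasis n m (S : 'cV[int]_n -> Prop) (b : 'I_m -> 'cV[int]_n) : Prop :=
  Zfree b /\ (forall i, S (b i)) /\
  (forall k, S k -> exists c : 'I_m -> int, k = \sum_(i < m) c i *: b i).

Definition stdvec n (i : nat) : 'cV[int]_n := \col_(j < n) ((j : nat) == i)%:R.

Definition actZ (R : realType) n (A : 'M[int]_n) (w : 'cV[R]_n) : 'cV[R]_n :=
  map_mx (fun z : int => z%:~R) A *m w.

Definition coords (R : realType) n (v : 'cV[R]_n) : seq R :=
  [seq v j 0 | j <- enum 'I_n].

Definition rational_vec (R : realType) n (v : 'cV[R]_n) : Prop :=
  forall i, exists q : rat, v i 0 = ratr q.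

Definition is_period (R : realType) n (v : 'cV[R]_n) (T : nat) : Prop :=
  (0 < T)%N /\ (forall i, T%:R * v i 0 \is a Num.int) /\
  (forall T' : nat, (0 < T')%N -> (forall i, T'%:R * v i 0 \is a Num.int) -> (T <= T')%N).

(* Main.v *)
Require Import Defs.
From HB Require Import structures.
From mathcomp Require Import all_boot all_order all_algebra.
From mathcomp Require Import reals.
From mathcomp Require Import zify ring.
From Stdlib Require Import Classical.
Import Order.TTheory GRing.Theory Num.Theory.
Local Open Scope ring_scope.
Set Implicit Arguments. Unset Strict Implicit. Unset Printing Implicit Defensive.

Definition subgrp n (S : 'cV[int]_n -> Prop) :=
  S 0 /\ (forall x y, S x -> S y -> S (x - y)).

Section Subgrp.
Variables (n : nat) (S : 'cV[int]_n -> Prop) (hS : subgrp S).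

Lemma sg0 : S 0. Proof. by case: hS. Qed.
Lemma sgB x y : S x -> S y -> S (x - y). Proof. by case: hS => _; apply. Qed.
Lemma sgN x : S x -> S (- x).
Proof. by move=> Sx; rewrite -sub0r; apply: sgB => //; apply: sg0. Qed.
Lemma sgD x y : S x -> S y -> S (x + y).
Proof. by move=> Sx Sy; rewrite -[y]opprK; apply: sgB => //; apply: sgN. Qed.
Lemma sgMn x m : S x -> S (x *+ m).
Proof.
move=> Sx; elim: m => [|m IH]; first by rewrite mulr0n; apply: sg0.
by rewrite mulrS; apply: sgD.
Qed.
Lemma sgZ (z : int) x : S x -> S (z *: x).
Proof.
move=> Sx; case: z => m; first by rewrite -natz scaler_nat; apply: sgMn.
by rewrite NegzE scaleNr; apply: sgN; rewrite -natz scaler_nat; apply: sgMn.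
Qed.
Lemma sgsum m (c : 'I_m -> int) (v : 'I_m -> 'cV[int]_n) :
  (forall i, S (v i)) -> S (\sum_(i < m) c i *: v i).
Proof.
move=> Sv; apply: (big_ind S) => //; [exact: sg0 | exact: sgD | ].
by move=> i _; apply: sgZ.
Qed.
End Subgrp.

Lemma ex_min_nat (P : nat -> Prop) : (exists m, P m) ->
  exists m, P m /\ forall k, P k -> (m <= k)%N.
Proof.
move=> [m Pm]; elim: m {-2}m (leqnn m) Pm => [|N IH] m hm Pm.
  by exists m; split => // k _; move: hm; rewrite leqn0 => /eqP ->.
case: (classic (exists k, P k /\ (k < m)%N)) => [[k [Pk hk]]|H].
  by apply: (IH k) => //; rewrite -ltnS (leq_trans hk).
exists m; split => // k Pk; rewrite leqNgt; apply/negP => hk; apply: H.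
by exists k.
Qed.

Lemma mx_col_repl n (G' : 'M[int]_n) (u c : 'cV[int]_n) (mo : 'I_n) :
  (forall i, G' i mo = 0) ->
  (\matrix_(i, j) (if j == mo then u i 0 else G' i j)) *m c =
  G' *m c + c mo ord0 *: u.
Proof.
move=> h; apply/matrixP => i k; rewrite (ord1 k) !mxE (bigD1 mo) //= mxE eqxx.
rewrite [X in _ = X + _](bigD1 mo) //= h mul0r add0r mulrC addrC; congr (_ + _).
by apply: eq_bigr => j /negbTE hj; rewrite mxE hj.
Qed.

Lemma gen_aux n m : (m <= n)%N -> forall S : 'cV[int]_n -> Prop, subgrp S ->
  (forall k, S k -> forall j : 'I_n, (m <= j)%N -> k j 0 = 0) ->
  exists G : 'M[int]_n, (forall i (j : 'I_n), (m <= j)%N -> G i j = 0) /\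
    forall k, S k <-> exists c, k = G *m c.
Proof.
elim: m => [|m IH] hm S hS hz.
  exists 0; split => [i j _|k]; first by rewrite mxE.
  split => [Sk|[c ->]]; last by rewrite mul0mx; apply: sg0.
  exists 0; rewrite mul0mx; apply/matrixP => i j; rewrite (ord1 j) mxE.
  exact: hz.
pose mo : 'I_n := Ordinal hm.
pose T := fun k => S k /\ k mo ord0 = 0.
have hT : subgrp T.
  split; first by split; [apply: sg0 | rewrite mxE].
  by move=> x y [Sx x0] [Sy y0]; split; [apply: sgB | rewrite !mxE x0 y0 subr0].
have hzT : forall k, T k -> forall j : 'I_n, (m <= j)%N -> k j 0 = 0.
  move=> k [Sk k0] j; rewrite leq_eqVlt => /orP [/eqP hj|hj]; last exact: hz.
  by have -> : j = mo by apply/val_inj.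
have [G' [G'0 HG']] := IH (ltnW hm) T hT hzT.
case: (classic (exists k, S k /\ k mo ord0 != 0)) => [Hex|Hnex]; last first.
  exists G'; split => [i j hj|k]; first by apply: G'0; apply: ltnW.
  rewrite -HG'; split => [Sk|[]//]; split => //.
  by apply/eqP; apply/negPn/negP => h; apply: Hnex; exists k.
pose P := fun g : nat => (0 < g)%N /\ exists u, S u /\ u mo ord0 = g%:Z.
have [g [[g0 [u [Su ug]]] gmin]] : exists g, P g /\ forall k, P k -> (g <= k)%N.
  apply: ex_min_nat; case: Hex => k [Sk k0].
  exists `|k mo ord0|%N; split; first by rewrite absz_gt0.
  case: (ltrP (k mo ord0) 0) => hk.
    exists (- k); split; first exact: sgN.
    by rewrite mxE abszE ltr0_norm.
  by exists k; split => //; rewrite abszE ger0_norm.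
have gdiv : forall k, S k -> (g%:Z %| k mo ord0)%Z.
  move=> k Sk; apply/dvdz_mod0P.
  pose q := (k mo ord0 %/ g%:Z)%Z.
  have Sk' : S (k - q *: u) by apply: sgB => //; apply: sgZ.
  have e : (k - q *: u) mo ord0 = (k mo ord0 %% g%:Z)%Z.
    by rewrite !mxE ug /q {1}(divz_eq (k mo ord0) g%:Z); ring.
  have gnz : g%:Z != 0 by rewrite eqz_nat -lt0n.
  have r0 := modz_ge0 (k mo ord0) gnz.
  have rlt : ((k mo ord0) %% g%:Z < g%:Z)%Z by apply: ltz_pmod; rewrite ltz_nat.
  apply/eqP; apply/negPn/negP => rnz.
  have : P `|(k mo ord0 %% g%:Z)%Z|%N.
    split; first by rewrite absz_gt0.
    by exists (k - q *: u); split => //; rewrite e abszE ger0_norm.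
  move/gmin; rewrite leqNgt => /negP; apply.
  by rewrite -ltz_nat abszE ger0_norm.
pose G := \matrix_(i, j) (if j == mo then u i 0 else G' i j).
have G'mo : forall i, G' i mo = 0 by move=> i; apply: G'0.
exists G; split.
  move=> i j hj; rewrite mxE.
  have -> : (j == mo) = false by apply/negbTE; rewrite -val_eqE /= neq_ltn hj orbT.
  by apply: G'0; apply: ltnW.
move=> k; split => [Sk|[c ->]]; last first.
  rewrite mx_col_repl //; apply: sgD => //; last exact: sgZ.
  by have [] : T (G' *m c) by apply/HG'; exists c.
pose q := (k mo ord0 %/ g%:Z)%Z.
have : T (k - q *: u).
  split; first by apply: sgB => //; apply: sgZ.
  by rewrite !mxE ug /q divzK ?gdiv // subrr.
move/HG' => [c hc].
exists (c + (q - c mo ord0) *: delta_mx mo ord0).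
rewrite mx_col_repl // mulmxDr -scalemxAr -colE.
have -> : col mo G' = 0 by apply/matrixP => i j; rewrite !mxE G'mo.
rewrite scaler0 addr0 -hc !mxE eqxx mulr1 addrC subrK.
by rewrite subrK.
Qed.

Lemma gen_subgrp n (S : 'cV[int]_n -> Prop) : subgrp S ->
  exists G : 'M[int]_n, forall k, S k <-> exists c, k = G *m c.
Proof.
move=> hS; have [|G [_ HG]] := gen_aux (leqnn n) hS.
  by move=> k _ j; rewrite leqNgt ltn_ord.
by exists G.
Qed.

Lemma Zfree_mul n m (M : 'M[int]_n) (v : 'I_m -> 'cV[int]_n) :
  M \in unitmx -> Zfree v -> Zfree (fun i => M *m v i).
Proof.
move=> hM hv c hc; apply: hv.
have : invmx M *m (\sum_(i < m) c i *: (M *m v i)) = 0 by rewrite hc mulmx0.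
rewrite mulmx_sumr => e; rewrite -[RHS]e; apply: eq_bigr => i _.
by rewrite -scalemxAr mulKmx.
Qed.

Lemma Zfree_sub n m k (h : (k <= m)%N) (v : 'I_m -> 'cV[int]_n) :
  Zfree v -> Zfree (fun i : 'I_k => v (widen_ord h i)).
Proof.
move=> hv c hc i.
pose c' := fun j : 'I_m => if (insub (val j) : option 'I_k) is Some i then c i else 0.
have ec : forall i, c' (widen_ord h i) = c i by move=> i'; rewrite /c' /= valK.
have : \sum_(j < m) c' j *: v j = 0.
  rewrite (bigID (fun j : 'I_m => (j < k)%N)) /=.
  rewrite [X in _ + X]big1 ?addr0; last first.
    move=> j /negbTE hj; rewrite /c' insubF ?hj //; exact: scale0r.
  by rewrite (big_ord_narrow h) /= -[RHS]hc; apply: eq_bigr => j _; rewrite ec.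
by move/hv/(_ (widen_ord h i)); rewrite ec.
Qed.

Lemma rank_lt n (S : 'cV[int]_n -> Prop) r s :
  subgroup_rank S r -> (exists v : 'I_s -> 'cV[int]_n, (forall i, S (v i)) /\ Zfree v) ->
  (s <= r)%N.
Proof.
move=> [_ hr] [v [Sv fv]]; rewrite leqNgt; apply/negP => hs.
exact: (hr (fun i : 'I_r.+1 => v (widen_ord hs i)) (fun i => Sv _) (@Zfree_sub _ _ _ hs v fv)).
Qed.

Lemma rank_uniq n (S : 'cV[int]_n -> Prop) r s :
  subgroup_rank S r -> subgroup_rank S s -> r = s.
Proof.
move=> hr hs; apply/eqP; rewrite eqn_leq; apply/andP; split.
  by apply: (rank_lt hs); case: hr.
by apply: (rank_lt hr); case: hs.
Qed.

Lemma rank_transport n (S S' : 'cV[int]_n -> Prop) (M : 'M[int]_n) r :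
  M \in unitmx -> (forall k, S' k <-> S (M *m k)) ->
  subgroup_rank S r -> subgroup_rank S' r.
Proof.
move=> hM hS [[v [Sv fv]] hr]; split.
  exists (fun i => invmx M *m v i); split.
    by move=> i; apply/hS; rewrite mulKVmx.
  by apply: Zfree_mul => //; rewrite unitmx_inv.
move=> u S'u fu; apply: (hr (fun i => M *m u i)).
  by move=> i; apply/hS.
exact: Zfree_mul.
Qed.

Lemma dependent n s (hs : (s <= n)%N) (v : 'I_s.+1 -> 'cV[int]_n) :
  (forall i (j : 'I_n), (s <= j)%N -> v i j 0 = 0) -> ~ Zfree v.
Proof.
move=> hv fv.
pose B : 'M[int]_(s.+1, s) := \matrix_(i, j) v i (widen_ord hs j) 0.
have [L uL [R' uR [d _ eB]]] := int_Smith_normal_form B.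
set Dg := \matrix_(i, j) _ in eB.
pose x := row ord_max (invmx L).
have xB : x *m B = 0.
  rewrite /x -row_mul eB -mulmxA mulKmx // row_mul.
  have -> : row ord_max Dg = 0.
    apply/matrixP => i j; rewrite !mxE.
    by rewrite /= gtn_eqF ?mulr0n.
  by rewrite mul0mx.
have xL : x *m L = row ord_max 1%:M by rewrite /x -row_mul mulVmx.
have x0 : x = 0.
  apply/matrixP => i j; rewrite (ord1 i) [RHS]mxE; apply: (fv (fun k => x 0 k)).
  apply/matrixP => p q; rewrite (ord1 q) summxE [RHS]mxE.
  under eq_bigr => k _ do rewrite mxE.
  case: (ltnP p s) => hp.
    have := congr1 (fun M : 'M[int]_(1, s) => M ord0 (Ordinal hp)) xB.
    rewrite [RHS]mxE mxE => e; rewrite -[RHS]e.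
    apply: eq_bigr => k _; rewrite !mxE; congr (_ * v k _ _).
    exact: val_inj.
  by apply: big1 => k _; rewrite !mxE hv // mulr0.
have := congr1 (fun M : 'M[int]_(1, s.+1) => M ord0 ord_max) xL.
by rewrite x0 mul0mx !mxE eqxx.
Qed.

Lemma dotZB (R : realType) n (x y : 'cV[int]_n) (w : 'cV[R]_n) :
  dotZ (x - y) w = dotZ x w - dotZ y w.
Proof.
rewrite /dotZ -sumrB; apply: eq_bigr => i _.
by rewrite !mxE rmorphB /= mulrBl.
Qed.

Lemma dotZ0 (R : realType) n (w : 'cV[R]_n) : dotZ 0 w = 0.
Proof. by rewrite /dotZ big1 // => i _; rewrite mxE mul0r. Qed.

Lemma res_subgrp (R : realType) n (w : 'cV[R]_n) : subgrp (in_resonance w).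
Proof.
split; first by rewrite /in_resonance dotZ0 rpred0.
by move=> x y; rewrite /in_resonance dotZB => hx hy; apply: rpredB.
Qed.

Lemma dotZ_act (R : realType) n (A : 'M[int]_n) (k : 'cV[int]_n) (w : 'cV[R]_n) :
  dotZ k (actZ A w) = dotZ (A^T *m k) w.
Proof.
rewrite /dotZ /actZ.
under eq_bigr => i _ do rewrite !mxE mulr_sumr.
rewrite exchange_big /=; apply: eq_bigr => j _.
rewrite !mxE rmorph_sum /= mulr_suml; apply: eq_bigr => i _.
rewrite !mxE rmorphM /=; ring.
Qed.

Lemma dotZ_std (R : realType) n (c : int) (i : 'I_n) (x : 'cV[R]_n) :
  dotZ (c *: stdvec n i) x = c%:~R * x i 0.
Proof.
rewrite /dotZ (bigD1 i) //= big1 ?addr0.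
  by rewrite !mxE eqxx mulr1.
by move=> j; rewrite -val_eqE /= => /negbTE hj; rewrite !mxE hj mulr0 mul0r.
Qed.

Lemma diag_mul n (d : seq int) (c : 'cV[int]_n) (i : 'I_n) :
  ((\matrix_(i, j) (d`_i *+ (i == j :> nat)) : 'M_n) *m c) i 0 = d`_i * c i 0.
Proof.
rewrite !mxE (bigD1 i) //= big1 ?addr0; first by rewrite mxE eqxx mulr1n.
by move=> j; rewrite -val_eqE /= eq_sym => /negbTE hj; rewrite mxE hj mulr0n mul0r.
Qed.

Lemma setup (R : realType) n (w : 'cV[R]_n) :
  exists (A : 'M[int]_n) (dl : seq int), A \in unitmx /\
    (forall i j, (i <= j)%N -> (dl`_i %| dl`_j)%Z) /\
    (forall k, in_resonance (actZ A w) k <-> forall i : 'I_n, (dl`_i %| k i ord0)%Z).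
Proof.
have [G HG] := gen_subgrp (res_subgrp w).
have [P uP [Q uQ [dl sd eG]]] := int_Smith_normal_form G.
set D := \matrix_(i, j) _ in eG.
exists P^T, dl; split; first by rewrite unitmx_tr.
split.
  move=> i j hij; case: (ltnP j (size dl)) => hj.
    apply: (sorted_leq_nth dvdz_trans dvdzz 0 sd) => //.
    by rewrite inE (leq_ltn_trans hij hj).
  by rewrite (nth_default 0 hj) dvdz0.
move=> k; rewrite /in_resonance dotZ_act trmxK -/(in_resonance w _) HG.
have step : (exists c, P *m k = G *m c) <-> exists c, k = D *m c.
  split => [[c hc]|[c hc]].
    exists (Q *m c); have := congr1 (mulmx (invmx P)) hc.
    by rewrite mulKmx // eG -!mulmxA mulKmx.
  exists (invmx Q *m c); rewrite eG -!mulmxA mulKVmx // hc.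
  by rewrite mulmxA.
split.
  move=> h; have [c hc] : exists c, k = D *m c.
    by apply/step; case: h => c hc; exists c.
  by move=> i; rewrite hc diag_mul dvdz_mulr.
move=> h; have [c hc] : exists c, k = D *m c.
  exists (\col_i (k i ord0 %/ dl`_i)%Z); apply/matrixP => i j.
  by rewrite (ord1 j) diag_mul mxE mulrC divzK.
by have [c' hc'] := proj2 step (ex_intro _ c hc); exists c'.
Qed.

Lemma nth_list (T : Type) n (f : 'I_n -> T) x0 p (hp : (p < n)%N) :
  nth x0 [seq f j | j <- enum 'I_n] p = f (Ordinal hp).
Proof.
rewrite (nth_map (Ordinal hp)) ?size_enum_ord //.
by have := nth_ord_enum (Ordinal hp) (Ordinal hp) => /= ->.
Qed.

Lemma coords_nth (R : realType) n (x : 'cV[R]_n) p (hp : (p < n)%N) :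
  (coords x)`_p = x (Ordinal hp) 0.
Proof. exact: nth_list. Qed.

Lemma coords_ord (R : realType) n (x : 'cV[R]_n) (i : 'I_n) :
  (coords x)`_i = x i 0.
Proof. by rewrite (coords_nth x (ltn_ord i)); congr (x _ _); apply: val_inj. Qed.

Lemma sum_std_entry n m (c : 'I_m -> int) (p : 'I_n) (hp : (p < m)%N) :
  (\sum_(j < m) c j *: stdvec n j) p 0 = c (Ordinal hp).
Proof.
rewrite summxE (bigD1 (Ordinal hp)) //= big1 ?addr0.
  by rewrite !mxE eqxx mulr1.
move=> j; rewrite -val_eqE /= => hj; rewrite !mxE.
by rewrite eq_sym (negbTE hj) mulr0.
Qed.

Lemma sum_std_entry0 n m (c : 'I_m -> int) (p : 'I_n) (hp : (m <= p)%N) :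
  (\sum_(j < m) c j *: stdvec n j) p 0 = 0.
Proof.
rewrite summxE big1 // => j _; rewrite !mxE.
by rewrite gtn_eqF ?mulr0 // (leq_trans (ltn_ord j) hp).
Qed.

Lemma std_entry n (c : int) (i : nat) (p : 'I_n) :
  (c *: stdvec n i) p 0 = if (p == i :> nat) then c else 0.
Proof. by rewrite !mxE; case: eqP => _; rewrite ?mulr1 ?mulr0. Qed.

Theorem proposition3p3 (R : realType) (n r : nat) (w : 'cV[R]_n) :
  resonant w -> resonance_order w r -> (1 <= r)%N ->
  exists (A : 'M[int]_n) (d : nat -> nat),
    A \in unitmx /\
    (forall i : nat, (i < r)%N -> (0 < d i)%N) /\
    (forall i : nat, (i.+1 < r)%N -> (d i %| d i.+1)%N) /\
    is_Zbasis (in_resonance (actZ A w)) (fun i : 'I_r => (d i)%:Z *: stdvec n i) /\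
    (exists (a : 'I_r -> int) (w' : 'cV[R]_(n - r)),
        (forall i : 'I_r, (coords (actZ A w))`_i = (a i)%:~R / (d r.-1)%:R) /\
        (forall j : 'I_(n - r), (coords (actZ A w))`_(r + j) = w' j 0) /\
        nonresonant w' /\
        is_period (\col_(i < r) ((a i)%:~R / (d r.-1)%:R : R)) (d r.-1)) /\
    (rational_vec w <-> r = n) /\
    (rational_vec w ->
       is_period w (d n.-1) /\
       exists a : 'I_n -> int, forall i : 'I_n,
         (coords (actZ A w))`_i = (a i)%:~R / (d i)%:R /\ coprimez (a i) (d i)).
Proof.
move=> _ hrank r1.
have [A [dl [uA [hdl hres]]]] := setup w.
set x := actZ A w.
pose Res' := fun k : 'cV[int]_n => forall i : 'I_n, (dl`_i %| k i ord0)%Z.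
have key : forall (i : 'I_n) (z : int), (dl`_i %| z)%Z <-> z%:~R * x i 0 \is a Num.int.
  move=> i z; have -> : z%:~R * x i 0 = dotZ (z *: stdvec n i) x by rewrite dotZ_std.
  split => h.
    apply/hres => p; rewrite std_entry; case: eqP => [/val_inj ->|_] //; exact: dvdz0.
  by have := (proj1 (hres _) h) i; rewrite std_entry eqxx.
have [s [Ps smin]] := ex_min_nat (P := fun m => m = n \/ dl`_m = 0)
  (ex_intro _ n (or_introl erefl)).
have sn : (s <= n)%N := smin n (or_introl erefl).
have nz : forall i, (i < s)%N -> dl`_i != 0.
  by move=> i hi; apply/eqP => h; have := smin i (or_intror h); rewrite leqNgt hi.
have z0 : forall j : 'I_n, (s <= j)%N -> dl`_j = 0.
  move=> j hj; case: Ps => [e|e]; first by move: hj; rewrite e leqNgt ltn_ord.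
  by apply/eqP; rewrite -dvd0z; have := hdl s j hj; rewrite e.
pose b := fun i : 'I_s => (absz dl`_i)%:Z *: stdvec n i.
have sumb : forall (c : 'I_s -> int), \sum_(i < s) c i *: b i =
    \sum_(i < s) (c i * (absz dl`_i)%:Z) *: stdvec n i.
  by move=> c; apply: eq_bigr => i _; rewrite scalerA.
have memb : forall i, Res' (b i).
  move=> i p; rewrite std_entry; case: eqP => [->|_]; last exact: dvdz0.
  by rewrite /dvdz /=.
have freeb : Zfree b.
  move=> c hc i.
  have := congr1 (fun M : 'cV[int]_n => M (widen_ord sn i) ord0) hc.
  rewrite /= sumb [RHS]mxE (@sum_std_entry n s _ (widen_ord sn i) (ltn_ord i)).
  have -> : Ordinal (ltn_ord i) = i by apply: val_inj.
  move/eqP; rewrite mulf_eq0 => /orP [/eqP //|].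
  by rewrite eqz_nat absz_eq0 (negbTE (nz _ (ltn_ord i))).
have rs : subgroup_rank Res' s.
  split; first by exists b.
  move=> v hv; apply: (dependent sn) => i j hj.
  by have := hv i j; rewrite z0 // dvd0z => /eqP.
have rx : subgroup_rank (in_resonance x) r.
  apply: (rank_transport (S := in_resonance w) (M := A^T)) hrank.
    by rewrite unitmx_tr.
  by move=> k; rewrite /in_resonance dotZ_act.
have rR : subgroup_rank Res' r.
  apply: (rank_transport (S := in_resonance x) (unitmx1 _ _)) rx => k.
  by rewrite mul1mx; split; [move/hres | move/hres].
have ers : s = r := esym (rank_uniq rR rs).
subst s.
exists A, (fun i => absz dl`_i).
split; first exact: uA.
split; first by move=> i hi; rewrite absz_gt0; exact: nz.
split; first by move=> i hi; exact: (hdl _ _ (leqnSn i)).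
split.
  split; first exact: freeb.
  split; first by move=> i; apply/hres; exact: memb.
  move=> k /hres Sk.
  exists (fun i : 'I_r => (k (widen_ord sn i) ord0 %/ (absz dl`_i)%:Z)%Z).
  rewrite -/(b _) sumb; apply/matrixP => p q; rewrite (ord1 q).
  case: (ltnP p r) => hp.
    rewrite (sum_std_entry _ hp) /= divzK.
      by congr (k _ _); apply: val_inj.
    by have := Sk p; rewrite /dvdz /=.
  rewrite sum_std_entry0 //; apply/eqP; rewrite -dvd0z -(z0 p hp); exact: Sk.
have r1' : (r.-1 < r)%N by rewrite prednK.
pose T := absz dl`_r.-1.
have Tpos : (0 < T)%N by rewrite absz_gt0 nz.
have TR0 : (T%:R : R) != 0 by rewrite pnatr_eq0 -lt0n.
have xint : forall i : 'I_n, (i < r)%N -> T%:R * x i 0 \is a Num.int.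
  move=> i hi; have := proj1 (key i T%:Z); apply.
  have hi' : (i <= r.-1)%N by rewrite -ltnS prednK.
  by apply: (dvdz_trans (hdl _ _ hi')); rewrite /dvdz /=.
pose a := fun i : 'I_r => Num.floor (T%:R * x (widen_ord sn i) 0).
have ha : forall i, (a i)%:~R = T%:R * x (widen_ord sn i) 0.
  by move=> i; apply/eqP; rewrite /a -intrEfloor; exact: (xint (widen_ord sn i) (ltn_ord i)).
have xa : forall i : 'I_r, x (widen_ord sn i) 0 = (a i)%:~R / T%:R.
  by move=> i; rewrite ha [T%:R * _]mulrC mulfK.
split.
  exists a, (\col_(j < n - r) (coords x)`_(r + j)); split.
    by move=> i /=; rewrite (coords_ord x (widen_ord sn i)) xa.
  split; first by move=> j; rewrite mxE.
  split.
    move=> k' hk'.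
    pose kl := [seq k' j 0 | j <- enum 'I_(n - r)].
    have hkl : forall j : 'I_(n - r), kl`_j = k' j 0.
      by move=> j; rewrite /kl (nth_list _ _ (ltn_ord j)); congr (k' _ _); apply: val_inj.
    pose k := \col_(p < n) (if (r <= p)%N then kl`_(p - r) else 0) : 'cV[int]_n.
    pose F := fun p : nat => if (r <= p)%N then (kl`_(p - r))%:~R * (coords x)`_p else 0 : R.
    have dk : dotZ k x = dotZ k' (\col_(j < n - r) (coords x)`_(r + j)).
      rewrite /dotZ (eq_bigr (fun p : 'I_n => F p)); last first.
        move=> p _; rewrite mxE -coords_ord /F; case: ifP => _ //; by rewrite mul0r.
      rewrite -(big_mkord xpredT F) (@big_cat_nat _ _ _ r 0 n _ _ (leq0n r) sn) /=.
      rewrite big_nat_cond big1 ?add0r; last first.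
        by move=> p /andP [/andP [_ hp] _]; rewrite /F leqNgt hp.
      rewrite -{1}[r]add0n big_addn big_mkord; apply: eq_bigr => j _.
      by rewrite /F leq_addl addnK mxE addnC hkl.
    have : in_resonance x k by rewrite /in_resonance dk.
    move/hres => Sk; apply/matrixP => j q; rewrite (ord1 q) mxE.
    have hj : (r + j < n)%N by rewrite -ltn_subRL.
    have := Sk (Ordinal hj); rewrite z0 /= ?leq_addr // dvd0z mxE leq_addr.
    by rewrite addKn hkl => /eqP.
  split; first exact: Tpos.
  split.
    by move=> i; rewrite mxE mulrC divfK //; apply: intr_int.
  move=> T' T'pos hT'.
  have := hT' (Ordinal r1'); rewrite mxE -(xa (Ordinal r1')) -[T'%:R]/((T'%:Z)%:~R).
  move/(proj2 (key _ _)) => /=; rewrite /dvdz /= => hd.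
  exact: dvdn_leq.
have winv : w = map_mx (fun z : int => z%:~R) (invmx A) *m x.
  by rewrite /x /actZ mulmxA -map_mxM mulVmx // map_mx1 mul1mx.
have wi : forall i, w i 0 = \sum_j ((invmx A) i j)%:~R * x j 0.
  by move=> i; rewrite {1}winv mxE; apply: eq_bigr => j _; rewrite mxE.
have xi : forall i, x i 0 = \sum_j (A i j)%:~R * w j 0.
  by move=> i; rewrite /x /actZ mxE; apply: eq_bigr => j _; rewrite mxE.
have hrat1 : rational_vec w -> r = n.
  move=> hq.
  have [m hm] : exists m : 'I_n -> int, forall i, m i != 0 /\ (m i)%:~R * w i 0 \is a Num.int.
    apply: (@fin_all_exists _ (fun _ => int) (fun i (z : int) => z != 0 /\ z%:~R * w i 0 \is a Num.int)) => i; have [q hq'] := hq i; exists (denq q); split.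
      exact: denq_neq0.
    by rewrite hq' -(ratr_int R (denq q)) -rmorphM [_ * q]mulrC -numqE rmorph_int intr_int.
  have nr : (n <= r)%N.
    apply: (rank_lt hrank); exists (fun i : 'I_n => m i *: stdvec n i); split.
      by move=> i; rewrite /in_resonance dotZ_std; case: (hm i).
    move=> c hc i.
    have := congr1 (fun M : 'cV[int]_n => M i ord0) hc.
    rewrite /= (eq_bigr (fun j : 'I_n => (c j * m j) *: stdvec n j)); last first.
      by move=> j _; rewrite scalerA.
    rewrite [RHS]mxE (@sum_std_entry n n _ i (ltn_ord i)).
    have -> : Ordinal (ltn_ord i) = i by apply: val_inj.
    move/eqP; rewrite mulf_eq0 => /orP [/eqP //|].
    by case: (hm i) => /negbTE ->.
  by apply/eqP; rewrite eqn_leq sn nr.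
have hrat2 : r = n -> rational_vec w.
  move=> ern i.
  have [qf hqf] : exists qf : 'I_n -> rat, forall j, x j 0 = ratr (qf j).
    apply: (@fin_all_exists _ (fun _ => rat) (fun j (q : rat) => x j 0 = ratr q)) => j.
    have hj : (j < r)%N by rewrite ern.
    exists ((Num.floor (T%:R * x j 0))%:~R / T%:R).
    rewrite fmorph_div /= ratr_int ratr_nat.
    have /eqP -> : (Num.floor (T%:R * x j 0))%:~R == T%:R * x j 0.
      by rewrite -intrEfloor; apply: xint.
    by rewrite [T%:R * _]mulrC mulfK.
  exists (\sum_j ((invmx A) i j)%:~R * qf j).
  rewrite wi rmorph_sum; apply: eq_bigr => j _.
  by rewrite rmorphM /= ratr_int hqf.
split; first by split; [apply: hrat1 | apply: hrat2].
move=> hq; have ern := hrat1 hq; subst r.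
split.
  split; first exact: Tpos.
  split.
    move=> i; rewrite wi mulr_sumr; apply: rpred_sum => j _.
    rewrite mulrCA; apply: rpredM; [exact: intr_int | exact: (xint j (ltn_ord j))].
  move=> T' T'pos hT'.
  have : (T'%:Z)%:~R * x (Ordinal r1') 0 \is a Num.int.
    rewrite xi mulr_sumr; apply: rpred_sum => j _.
    rewrite mulrCA; apply: rpredM; [exact: intr_int | exact: hT'].
  by move/(proj2 (key _ _)); rewrite /dvdz /= => hd; apply: dvdn_leq.
exists (fun i : 'I_n => Num.floor ((absz dl`_i)%:R * x i 0)) => i.
set D := absz dl`_i.
have Dpos : (0 < D)%N by rewrite absz_gt0 nz.
have DR0 : (D%:R : R) != 0 by rewrite pnatr_eq0 -lt0n.
set ai := Num.floor _.
have hai : ai%:~R = D%:R * x i 0.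
  apply/eqP; rewrite -intrEfloor; apply: (proj1 (key i D%:Z)).
  by rewrite /dvdz /=.
have xe : x i 0 = ai%:~R / D%:R by rewrite hai [D%:R * _]mulrC mulfK.
split; first by rewrite coords_ord -/x xe.
rewrite /coprimez /gcdz /=.
set g := gcdn `|ai| D.
have gpos : (0 < g)%N by rewrite gcdn_gt0 Dpos orbT.
have gD : (g %| D)%N := dvdn_gcdr _ _.
have ga : (g%:Z %| ai)%Z := dvdn_gcdl _ _.
set mn := (D %/ g)%N.
have eD : D = (mn * g)%N by rewrite divnK.
have mnpos : (0 < mn)%N by move: Dpos; rewrite eD muln_gt0 => /andP [].
have hd : (dl`_i %| mn%:Z)%Z.
  apply/(key i); have e2 : ai = (ai %/ g%:Z)%Z * g%:Z by rewrite divzK.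
  have -> : (mn%:Z)%:~R * x i 0 = ((ai %/ g%:Z)%Z)%:~R :> R.
    have mR : (mn%:R : R) != 0 by rewrite pnatr_eq0 -lt0n.
    have gR : (g%:R : R) != 0 by rewrite pnatr_eq0 -lt0n.
    rewrite xe {1}e2 intrM eD natrM.
    change ((mn%:Z)%:~R) with (mn%:R : R); change ((g%:Z)%:~R) with (g%:R : R).
    by field; apply/andP.
  exact: intr_int.
move: hd; rewrite /dvdz /= -/D => /(dvdn_leq mnpos) hle.
apply/eqP; move: hle gpos mnpos; rewrite eD; nia.
Qed.
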